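(* Let $n\in\mathbb N$ and let $\varphi\colon[0,\infty)\to[0,\infty)$ be a continuous increasing function with $\varphi(0)=0$ such that $\liminf_{r\to0^+}\varphi(r)/r^n>0$. Then there exist a continuous increasing function $\varphi^\circ\colon[0,\infty)\to[0,\infty)$ with $\varphi^\circ(0)=0$ and a constant $c=c(n)>0$ such that $r\mapsto\varphi^\circ(r)/r^n$ is non-increasing on $(0,\infty)$ and $$c\,\mathscr H^{\varphi}_\delta(E)\le \mathscr H^{\varphi^\circ}_\delta(E)\le \mathscr H^{\varphi}_\delta(E)$$ for every $\delta\in(0,\infty]$ and every set $E\subset\mathbb R^n$.
   Context: For a continuous increasing function $\phi\colon[0,\infty)\to[0,\infty)$ with $\phi(0)=0$, for $\delta\in(0,\infty]$ and $E\subset\mathbb R^n$, set $\mathscr H^{\phi}_\delta(E)=\inf\{\sum_{i=1}^\infty\phi(d(E_i)) : E_i\subset\mathbb R^n,\ d(E_i)\le\delta,\ E\subset\bigcup_i E_i\}$, where $d(\cdot)$ denotes the diameter. *)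

(* Defs.v *)
From mathcomp Require Import all_boot all_order all_algebra.
From mathcomp Require Import all_classical all_reals all_analysis.
Set Implicit Arguments. Unset Strict Implicit. Unset Printing Implicit Defensive.
Import Order.TTheory GRing.Theory Num.Theory numFieldNormedType.Exports.
Local Open Scope classical_set_scope.
Local Open Scope ring_scope.

Definition edist {R : realType} {n : nat} (x y : 'rV[R]_n) : R :=
  Num.sqrt (\sum_(i < n) (x ord0 i - y ord0 i) ^+ 2).

(* Diameter (extended real); diam set0 = 0. *)
Definition diam {R : realType} {n : nat} (E : set 'rV[R]_n) : \bar R :=
  ereal_sup ([set 0%:E] `|` [set (edist x y)%:E | x in E & y in E]).

(* Extension of phi : [0,oo) -> [0,oo) to [0,+oo]: phi(+oo) := sup phi
   (the monotone limit), phi(-oo) := 0 (never used: diameters are >= 0). *)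
Definition phiE {R : realType} (phi : R -> R) (x : \bar R) : \bar R :=
  match x with
  | r%:E => (phi r)%:E
  | +oo%E => ereal_sup [set (phi r)%:E | r in [set r : R | 0 <= r]]
  | -oo%E => 0%E
  end.

Definition hcontent {R : realType} {n : nat} (phi : R -> R) (delta : \bar R)
    (E : set 'rV[R]_n) : \bar R :=
  ereal_inf [set s | exists F : nat -> set 'rV[R]_n,
     [/\ (forall i, (diam (F i) <= delta)%E),
         E `<=` \bigcup_i F i &
         s = (\sum_(0 <= i <oo) phiE phi (diam (F i)))%E]].

Definition admissible_gauge {R : realType} (phi : R -> R) : Prop :=
  [/\ {within [set r : R | 0 <= r], continuous phi},
      (forall r, 0 <= r -> 0 <= phi r),
      (forall r s, 0 <= r -> r <= s -> phi r <= phi s) &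
      phi 0 = 0].

(* Main.v *)
From Pilot Require Import Defs.
From mathcomp Require Import all_boot all_order all_algebra.
From mathcomp Require Import all_classical all_reals all_analysis.
From mathcomp Require Import lra ring.
Import Order.TTheory GRing.Theory Num.Theory numFieldNormedType.Exports.
Set Implicit Arguments. Unset Strict Implicit. Unset Printing Implicit Defensive.
Local Open Scope classical_set_scope.
Local Open Scope ring_scope.
Local Notation edist := Pilot.Defs.edist.
Local Notation diam := Pilot.Defs.diam.
Local Notation phiE := Pilot.Defs.phiE.
Local Notation hcontent := Pilot.Defs.hcontent.
Local Notation admissible_gauge := Pilot.Defs.admissible_gauge.
Section Aux.
Variable R : realType.
Implicit Types (n : nat).

Lemma edist_ge0 n (x y : 'rV[R]_n) : 0 <= edist x y.
Proof. exact: sqrtr_ge0. Qed.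

Lemma coord_le_edist n (x y : 'rV[R]_n) i :
  `|x ord0 i - y ord0 i| <= edist x y.
Proof.
rewrite /edist -sqrtr_sqr ler_sqrt; last first.
  by apply: sumr_ge0 => j _; exact: sqr_ge0.
rewrite (bigD1 i) //= lerDl; apply: sumr_ge0 => j _; exact: sqr_ge0.
Qed.

Lemma edist_le_cube n (x y : 'rV[R]_n) t : 0 <= t ->
  (forall i, `|x ord0 i - y ord0 i| <= t) -> edist x y <= n%:R * t.
Proof.
move=> t0 H; rewrite /edist.
have -> : n%:R * t = Num.sqrt ((n%:R * t) ^+ 2).
  by rewrite sqrtr_sqr ger0_norm // mulr_ge0.
rewrite ler_sqrt; last exact: sqr_ge0.
apply: (@le_trans _ _ (\sum_(i < n) t ^+ 2)).
  apply: ler_sum => i _; rewrite -real_normK ?num_real //.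
  by rewrite lerXn2r ?nnegrE //.
rewrite sumr_const card_ord exprMn -[t ^+ 2 *+ n]mulr_natl; apply: ler_wpM2r; first exact: sqr_ge0.
rewrite -natrX ler_nat; case: n {x y H} => // n.
by rewrite expnS leq_pmulr.
Qed.

Local Open Scope ereal_scope.

Lemma diam_ge0 n (A : set 'rV[R]_n) : 0 <= diam A.
Proof. by apply: ereal_sup_ubound; left. Qed.

Lemma diam_le n (A : set 'rV[R]_n) (d : R) : (0 <= d)%R ->
  (forall x y, A x -> A y -> (edist x y <= d)%R) -> diam A <= d%:E.
Proof.
move=> d0 H; apply: ge_ereal_sup => z [->|[x Ax [y Ay <-]]].
  by rewrite lee_fin.
by rewrite lee_fin; exact: H.
Qed.

Lemma edist_le_diam n (A : set 'rV[R]_n) x y : A x -> A y ->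
  (edist x y)%:E <= diam A.
Proof. by move=> Ax Ay; apply: ereal_sup_ubound; right; exists x => //; exists y. Qed.

Lemma diam0 n : diam (@set0 'rV[R]_n) = 0.
Proof.
apply/eqP; rewrite eq_le diam_ge0 andbT; apply: diam_le => // x y [].
Qed.

Lemma diam_fin n (A : set 'rV[R]_n) (d : R) : diam A = d%:E ->
  (0 <= d)%R /\ forall x y, A x -> A y -> (edist x y <= d)%R.
Proof.
move=> dA; split; first by rewrite -lee_fin -dA diam_ge0.
by move=> x y Ax Ay; rewrite -lee_fin -dA; exact: edist_le_diam.
Qed.

End Aux.
Section HC.
Variable R : realType.
Local Open Scope ereal_scope.

Lemma phiE_ge0 (phi : R -> R) x : admissible_gauge phi -> 0 <= x -> 0 <= phiE phi x.
Proof.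
case=> _ ph0 _ p0; case: x => [r| |] //=; rewrite ?lee_fin.
- by move=> r0; apply: ph0.
- move=> _; apply: le_ereal_sup_tmp; exists (phi 0%R)%:E; first by exists 0%R => //=; rewrite /= lexx.
  by rewrite p0 lee_fin.
Qed.

Lemma phiE_diam_ge0 (phi : R -> R) n (A : set 'rV[R]_n) :
  admissible_gauge phi -> 0 <= phiE phi (diam A).
Proof. by move=> adm; apply: phiE_ge0 => //; exact: diam_ge0. Qed.

Lemma phiE_diam0 (phi : R -> R) n : admissible_gauge phi ->
  phiE phi (diam (@set0 'rV[R]_n)) = 0.
Proof. by case=> _ _ _ p0; rewrite diam0 /= p0. Qed.

Lemma hcontent_ge0 (phi : R -> R) n delta (E : set 'rV[R]_n) :
  admissible_gauge phi -> 0 <= hcontent phi delta E.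
Proof.
move=> adm; apply: le_ereal_inf_tmp => _ [F [_ _ ->]].
by apply: nneseries_ge0 => j _ _; exact: phiE_diam_ge0.
Qed.

Lemma hcontent_fin (phi : R -> R) n delta (E : set 'rV[R]_n)
    (G : nat -> set 'rV[R]_n) N :
  admissible_gauge phi -> 0 <= delta ->
  (forall j, (j < N)%N -> diam (G j) <= delta) ->
  E `<=` (fun x => exists2 j, (j < N)%N & G j x) ->
  hcontent phi delta E <= \sum_(0 <= j < N) phiE phi (diam (G j)).
Proof.
move=> adm d0 GD EG.
pose F j := if (j < N)%N then G j else set0.
apply: ereal_inf_lbound; exists F; split.
- by move=> j; rewrite /F; case: ifP => [/GD //| _]; rewrite diam0.
- move=> x /EG [j jN Gx]; exists j => //; by rewrite /F jN.
- rewrite (@nneseries_split _ _ 0 N); last by move=> k _; exact: phiE_diam_ge0.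
  rewrite add0n eseries0 ?adde0; last first.
    by move=> i Ni _; rewrite /F ltnNge Ni /= phiE_diam0.
  apply: eq_big_nat => i /andP[_ iN]; by rewrite /F iN.
Qed.

Lemma hcontent_sub (phi : R -> R) n delta (E : set 'rV[R]_n)
    (A : nat -> set 'rV[R]_n) :
  admissible_gauge phi -> E `<=` \bigcup_i A i ->
  hcontent phi delta E <= \sum_(i <oo) hcontent phi delta (A i).
Proof.
move=> adm EA.
have H0 (X : set 'rV[R]_n) : 0 <= hcontent phi delta X by exact: hcontent_ge0.
have [[i ioo]|] := pselect (exists i, hcontent phi delta (A i) = +oo).
  rewrite (eseries_pinfty _ _ ioo) ?leey// => k _.
  by rewrite -ltNye (lt_le_trans _ (H0 _)).
rewrite -forallNE => Aoo.
suff add2e (e : {posnum R}) :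
    hcontent phi delta E <= \sum_(i <oo) hcontent phi delta (A i) + e%:num%:E.
  by apply/lee_addgt0Pr => _/posnumP[].
rewrite (le_trans _ (epsilon_trick _ _ _))//; try by move=> k; exact: H0.
pose P k (B : (set 'rV[R]_n)^nat) :=
  [/\ (forall i, diam (B i) <= delta), A k `<=` \bigcup_i B i &
  \sum_(i <oo) phiE phi (diam (B i)) <=
     hcontent phi delta (A k) + (e%:num / (2 ^ k.+1)%:R)%:E].
have [G PG] : {G : ((set 'rV[R]_n)^nat)^nat & forall k, P k (G k)}.
  apply: (@choice _ _ P) => k; rewrite /P /hcontent.
  set S := (X in ereal_inf X); move infS : (ereal_inf S) => iS.
  case: iS infS => [r Sr|Soo|Soo].
  - have en1 : (0 < e%:num / (2 ^ k.+1)%:R)%R by [].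
    have /(lb_ereal_inf_adherent en1) : ereal_inf S \is a fin_num by rewrite Sr.
    move=> [x [B [Bd AB ->]] xS].
    by exists B; split => //; rewrite -Sr; exact/ltW.
  - by have := Aoo k; rewrite /hcontent Soo.
  - suff : lbound S 0 by move/le_ereal_inf_tmp; rewrite Soo.
    by move=> /= _ [B [_ _ ->]]; apply: nneseries_ge0 => j _ _; exact: phiE_diam_ge0.
have muG_ge0 x : 0 <= (phiE phi \o diam \o uncurry G) x by exact: phiE_diam_ge0.
apply: (@le_trans _ _ (\esum_(i in setT) (phiE phi \o diam \o uncurry G) i)).
  apply: ereal_inf_lbound => /=.
  have /card_esym/ppcard_eqP[f] := card_nat2.
  exists (uncurry G \o f); split.
  - by move=> i /=; case: (f i) => a b /=; case: (PG a).
  - move=> t /EA [i _ Ait]; case: (PG i) => _ /(_ t Ait) [j _ Gijt] _.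
    exists (f^-1%FUN (i, j)) => //=.
    by rewrite invK ?inE.
  - apply/esym.
    rewrite -(esum_pred_image (phiE phi \o diam \o uncurry G) _ xpredT) ?[fun=> _]set_true//.
    by rewrite image_eq.
rewrite (_ : esum _ _ = \sum_(i <oo) \sum_(j <oo ) phiE phi (diam (G i j))); last first.
  pose J : nat -> set (nat * nat) := fun i => [set (i, j) | j in setT].
  rewrite (_ : setT = \bigcup_k J k); last first.
    by rewrite predeqE => -[a b]; split => // _; exists a => //; exists b.
  rewrite esum_bigcupT /=; last 2 first.
    - apply/trivIsetP => i j _ _ ij.
      rewrite predeqE => -[k m] /=; split => //= -[] [_] _ [<-{k} _].
      by move=> [m' _] [] /esym/eqP; rewrite (negbTE ij).
    - by move=> /= [k m]; exact: phiE_diam_ge0.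
  rewrite -(image_id [set: nat]) -fun_true esum_pred_image//; last first.
    by move=> k _; apply: esum_ge0 => -[a b] _; exact: phiE_diam_ge0.
  apply: eq_eseriesr => /= j _.
  rewrite -(esum_pred_image (phiE phi \o diam \o uncurry G) (pair j) predT)//=;
    try (by move=> ? ? _ _; exact: (@can_inj _ _ _ snd));
    try (by move=> k _; exact: phiE_diam_ge0).
  by congr esum; rewrite predeqE => -[a b]; split; move=> [i _ <-]; exists i.
apply: lee_lim.
- apply: is_cvg_nneseries => k *.
  by apply: nneseries_ge0 => m *; exact: phiE_diam_ge0.
- by apply: is_cvg_nneseries => k *; apply: adde_ge0 => //.
- by near=> k; apply: lee_sum => i _; case: (PG i).
Unshelve. all: by end_near. Qed.

End HC.
Section Phio.
Variable R : realType.

Definition Tf (n : nat) (phi : R -> R) (r s : R) := phi s * Num.max 1 ((r / s) ^+ n).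
Definition phio (n : nat) (phi : R -> R) (r : R) : R :=
  if r <= 0 then 0 else inf [set Tf n phi r s | s in [set s : R | 0 < s]].

Variables (n : nat) (phi : R -> R).
Hypothesis adm : admissible_gauge phi.

Lemma phi_ge0 r : 0 <= r -> 0 <= phi r.
Proof. by case: adm => _ + _ _; apply. Qed.

Lemma phi_mono r s : 0 <= r -> r <= s -> phi r <= phi s.
Proof. by case: adm => _ _ + _; apply. Qed.

Lemma phi0 : phi 0 = 0.
Proof. by case: adm. Qed.

Lemma Tf_ge0 r s : 0 < s -> 0 <= Tf n phi r s.
Proof.
move=> s0; rewrite /Tf mulr_ge0 ?phi_ge0 ?ltW //.
by rewrite lt_max ltr01.
Qed.

Lemma phio_lb r : has_lbound [set Tf n phi r s | s in [set s : R | 0 < s]].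
Proof. by exists 0 => _ [s s0 <-]; exact: Tf_ge0. Qed.

Lemma phio_ne r : [set Tf n phi r s | s in [set s : R | 0 < s]] !=set0.
Proof. by exists (Tf n phi r 1); exists 1 => //=. Qed.

Lemma phio_le r s : 0 < r -> 0 < s -> phio n phi r <= Tf n phi r s.
Proof.
move=> r0 s0; rewrite /phio ifF; last by rewrite leNgt r0.
by apply: ge_inf; [exact: phio_lb | exists s].
Qed.

Lemma phio_ge0 r : 0 <= phio n phi r.
Proof.
rewrite /phio; case: ifP => // _.
by apply: lb_le_inf; [exact: phio_ne | move=> _ [s s0 <-]; exact: Tf_ge0].
Qed.

Lemma phio0 : phio n phi 0 = 0.
Proof. by rewrite /phio lexx. Qed.

Lemma phio_le_phi r : 0 <= r -> phio n phi r <= phi r.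
Proof.
rewrite le_eqVlt => /orP[/eqP<-|r0]; first by rewrite phio0 phi0.
apply: (le_trans (phio_le r0 r0)).
by rewrite /Tf divff ?gt_eqF // expr1n maxxx mulr1.
Qed.

Lemma Tf_mono r r' s : 0 < s -> 0 <= r -> r <= r' -> Tf n phi r s <= Tf n phi r' s.
Proof.
move=> s0 r0 rr; rewrite /Tf; apply: ler_wpM2l; first by apply: phi_ge0; exact: ltW.
rewrite ge_max le_max lexx /= le_max; apply/orP; right.
have s0' : 0 <= s^-1 by rewrite invr_ge0 ltW.
apply: lerXn2r; rewrite ?nnegrE.
- exact: mulr_ge0.
- apply: mulr_ge0 => //; exact: le_trans rr.
- exact: ler_wpM2r.
Qed.

Lemma phio_mono r r' : 0 <= r -> r <= r' -> phio n phi r <= phio n phi r'.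
Proof.
rewrite le_eqVlt => /orP[/eqP<-|r0] rr; first by rewrite phio0 phio_ge0.
have r'0 : 0 < r' by apply: lt_le_trans rr.
rewrite {2}/phio ifF; last by rewrite leNgt r'0.
apply: lb_le_inf; first exact: phio_ne.
move=> _ [s s0 <-]; apply: (le_trans (phio_le r0 s0)).
by apply: Tf_mono => //; exact: ltW.
Qed.

Lemma phio_ratio r r' : 0 < r -> r <= r' ->
  phio n phi r' <= (r' / r) ^+ n * phio n phi r.
Proof.
move=> r0 rr; have r'0 : 0 < r' by apply: lt_le_trans rr.
set k := (r' / r) ^+ n.
have k1 : 1 <= k by rewrite /k exprn_ege1 // ler_pdivlMr // mul1r.
have k0 : 0 < k by apply: lt_le_trans k1.
rewrite -ler_pdivrMl // {2}/phio ifF; last by rewrite leNgt r0.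
apply: lb_le_inf; first exact: phio_ne.
move=> _ [s s0 <-]; rewrite ler_pdivrMl //.
apply: (le_trans (phio_le r'0 s0)).
rewrite /Tf mulrCA; apply: ler_wpM2l; first by apply: phi_ge0; exact: ltW.
have -> : (r' / s) ^+ n = k * (r / s) ^+ n.
  by rewrite /k -exprMn mulrA divfK ?gt_eqF.
rewrite ge_max; apply/andP; split.
  rewrite (le_trans k1) //; apply: ler_peMr; first exact: ltW.
  by rewrite le_max lexx.
by apply: ler_wpM2l; [exact: ltW | rewrite le_max lexx orbT].
Qed.

End Phio.
Section Cont.
Variable R : realType.

Lemma between_norm (a b c : R) : (a <= b <= c) || (c <= b <= a) ->
  `|a - b| <= `|a - c|.
Proof.
case/orP => /andP[h1 h2].
- have ac : a <= c by exact: le_trans h2.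
  rewrite distrC [`|a - c|]distrC !ger0_norm ?subr_ge0 //.
  by rewrite lerD2r.
- have ca : c <= a by exact: le_trans h2.
  rewrite !ger0_norm ?subr_ge0 //.
  by rewrite lerD2l lerN2.
Qed.

Lemma cont_dom (A : set R) (f v : R -> R) x :
  v @ within A (nbhs x) --> v x ->
  (forall y, A y -> `|f x - f y| <= `|v x - v y|) ->
  f @ within A (nbhs x) --> f x.
Proof.
move=> cv H; apply/cvgrPdist_le => e e0.
move/cvgrPdist_le : cv => /(_ e e0) hv.
have hA : \forall y \near within A (nbhs x), A y by exact: withinT.
move: hA hv; apply: filterS2 => y Ay hy.
exact: le_trans (H y Ay) hy.
Qed.

Lemma phio_cont n phi : (0 < n)%N -> admissible_gauge phi ->
  {within [set r : R | 0 <= r], continuous (phio n phi)}.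
Proof.
move=> n0 adm; apply/subspace_continuousP => x /= x0.
have cphi := adm; case: cphi => /subspace_continuousP cphi _ _ _.
move: x0; rewrite le_eqVlt => /orP[/eqP <-|x0].
- apply: (cont_dom (cphi 0 (lexx 0))) => y /= y0.
  rewrite /from_subspace /=.
  rewrite phio0 (phi0 adm) !sub0r !normrN !ger0_norm ?phio_ge0 ?(phi_ge0 adm) //.
  exact: phio_le_phi.
- pose c := phio n phi x / x ^+ n.
  have xn0 : 0 < x ^+ n by exact: exprn_gt0.
  have vx : c * x ^+ n = phio n phi x by rewrite /c divfK ?gt_eqF.
  apply: (@cont_dom _ _ (fun y => c * y ^+ n)).
    apply: cvg_within_filter; apply: cvgMl_tmp; exact: exprn_continuous.
  move=> y /= y0; rewrite /from_subspace /= vx; apply: between_norm.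
  case: (leP x y) => xy.
  + apply/orP; left; rewrite phio_mono ?(ltW x0) //=.
    apply: (le_trans (@phio_ratio _ n phi adm x y x0 xy)).
    by rewrite expr_div_n /c mulrAC [_ / x ^+ n * _]mulrC mulrA.
  + apply/orP; right; rewrite phio_mono ?(ltW xy) // andbT.
    move: y0; rewrite le_eqVlt => /orP[/eqP <-|y0].
      by rewrite expr0n eqn0Ngt n0 /= mulr0 phio_ge0.
    have yn0 : 0 < y ^+ n by exact: exprn_gt0.
    have := @phio_ratio _ n phi adm y x y0 (ltW xy).
    rewrite expr_div_n /c mulrAC ler_pdivlMr // => h.
    rewrite mulrAC ler_pdivrMr //.
    by rewrite [phio n phi y * _]mulrC.
Qed.

End Cont.
Section Grid.
Variable R : realType.

Lemma phiE_le_s (phi : R -> R) n (B : set 'rV[R]_n) s :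
  admissible_gauge phi -> (diam B <= s%:E)%E -> (phiE phi (diam B) <= (phi s)%:E)%E.
Proof.
move=> adm; have := diam_ge0 B; case: (diam B) => [r| |] //=.
by rewrite !lee_fin => r0 rs; apply: phi_mono.
Qed.

Lemma grid_bound (phi : R -> R) n delta (A : set 'rV[R]_n) (d s : R) a :
  admissible_gauge phi -> (0 < n)%N -> 0 < s -> s <= d -> (s%:E <= delta)%E ->
  (forall x y, A x -> A y -> edist x y <= d) -> A a ->
  (hcontent phi delta A <= ((3 * n%:R * (d / s)) ^+ n * phi s)%:E)%E.
Proof.
move=> adm n0 s0 sd sD Ad Aa.
have d0 : 0 < d := lt_le_trans s0 sd.
have n1 : 1 <= n%:R :> R by rewrite ler1n.
set z := 2 * d * n%:R / s.
have z0 : 0 <= z by rewrite /z divr_ge0 ?mulr_ge0 ?ltW //; lra.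
pose m' := Num.truncn z.
have [mz zm] : (m'%:R <= z) /\ (z < m'.+1%:R) by apply/andP; exact: truncn_itv.
have m0 : 0 < m'.+1%:R :> R by rewrite ltr0n.
pose t := 2 * d / m'.+1%:R.
have t0 : 0 < t by rewrite /t divr_gt0 //; lra.
have mt : m'.+1%:R * t = 2 * d by rewrite /t mulrC divfK ?gt_eqF.
have nts : n%:R * t <= s.
  have h : 2 * d * n%:R < m'.+1%:R * s by rewrite -ltr_pdivrMr.
  have -> : n%:R * t = (2 * d * n%:R) / m'.+1%:R by rewrite /t; ring.
  rewrite ler_pdivrMr //; lra.
pose T := {ffun 'I_n -> 'I_m'.+1}.
pose k0 : T := [ffun => ord0].
pose cube (k : T) := [set x : 'rV[R]_n | A x /\ forall i,
  (k i)%:R * t <= x ord0 i - a ord0 i + d <= (k i).+1%:R * t].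
pose G j := cube (nth k0 (enum T) j).
have diamc k : (diam (cube k) <= s%:E)%E.
  apply: diam_le; first exact: ltW.
  move=> x y [_ hx] [_ hy]; apply: le_trans nts.
  apply: edist_le_cube; first exact: ltW.
  move=> i; have /andP[h1 h2] := hx i; have /andP[h3 h4] := hy i.
  rewrite -natr1 mulrDl mul1r in h2 h4.
  rewrite ler_norml; apply/andP; split; lra.
apply: (le_trans (hcontent_fin (G := G) (N := #|T|) adm _ _ _)).
- by apply: le_trans sD; rewrite lee_fin ltW.
- by move=> j _; apply: le_trans sD; exact: diamc.
- move=> x Ax.
  pose u i := x ord0 i - a ord0 i + d.
  have ub i : 0 <= u i <= 2 * d.
    have := coord_le_edist x a i; have := Ad x a Ax Aa.
    rewrite /u => h1 h2; have := le_trans h2 h1; rewrite ler_norml => /andP[h3 h4].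
    apply/andP; split; lra.
  pose k : T := [ffun i => inord (let q := Num.truncn (u i / t) in
                                   if (q <= m')%N then q else m')].
  have hk : cube k x.
    split => // i; rewrite /k ffunE.
    have ut0 : 0 <= u i / t by apply: divr_ge0; [case/andP: (ub i) | exact: ltW].
    have /andP[q1 q2] := truncn_itv ut0.
    move: q1 q2; rewrite /=; set q := Num.truncn _ => q1 q2.
    rewrite ler_pdivlMr // in q1; rewrite ltr_pdivrMr // in q2.
    case: (leqP q m') => qm.
      rewrite inordK ?ltnS //.
      apply/andP; split => //; exact: ltW.
    rewrite inordK ?ltnS //.
    apply/andP; split.
      apply: le_trans q1; rewrite ler_pM2r // ler_nat; exact: ltnW.
    by rewrite mt; case/andP: (ub i).
  exists (index k (enum T)); first by rewrite cardE index_mem mem_enum.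
  by rewrite /G nth_index ?mem_enum.
- rewrite (@le_trans _ _ (\sum_(0 <= j < #|T|) (phi s)%:E))%E //.
    by apply: lee_sum => j _; apply: phiE_le_s => //; exact: diamc.
  rewrite sumEFin sumr_const_nat subn0 lee_fin -[_ *+ #|T|]mulr_natl.
  apply: ler_wpM2r; first by apply: phi_ge0 => //; exact: ltW.
  rewrite card_ffun !card_ord natrX; apply: lerXn2r; rewrite ?nnegrE ?ler0n //.
    apply: mulr_ge0; [apply: mulr_ge0 => //; lra | apply: divr_ge0; apply: ltW => //].
  have ds : 1 <= d / s by rewrite ler_pdivlMr // mul1r.
  have : 1 <= n%:R * (d / s) by rewrite -[1]mulr1; apply: ler_pM => //; lra.
  have ez : z = 2 * (n%:R * (d / s)) by rewrite /z; ring.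
  have -> : 3 * n%:R * (d / s) = 3 * (n%:R * (d / s)) by ring.
  move: (n%:R * (d / s)) ez => X ez hX.
  rewrite -natr1; rewrite ez in mz; lra.
Qed.

End Grid.
Section Sup.
Variable R : realType.

Lemma liminf_pos (phi : R -> R) n :
  (0 < limf_einf (fun r : R => (phi r / r ^+ n)%:E) (0^'+))%E ->
  exists a eta : R, [/\ 0 < a, 0 < eta &
    forall s, 0 < s -> s < eta -> a <= phi s / s ^+ n].
Proof.
rewrite limf_einfE => /ereal_sup_gt [_ [V V0 <-] hV].
move: V0 => /nbhs_ballP [e /= e0 He].
have Vs s : 0 < s -> s < e -> V s.
  move=> s0 se; apply: (He s) => //; rewrite /ball /= sub0r normrN gtr0_norm //.
move: hV; set m := ereal_inf _ => hm.
have mle s : 0 < s -> s < e -> (m <= (phi s / s ^+ n)%:E)%E.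
  by move=> s0 se; apply: ereal_inf_lbound; exists s => //; exact: Vs.
case: m hm mle => [r| |] // hm mle.
- by exists r, e; split => //.
- exists 1, e; split => // s s0 se; have := mle s s0 se; by rewrite leye_eq.
Qed.

Lemma sup_rel (phi : R -> R) n : admissible_gauge phi -> (0 < n)%N ->
  (exists a eta : R, [/\ 0 < a, 0 < eta &
    forall s, 0 < s -> s < eta -> a <= phi s / s ^+ n]) ->
  (phiE phi +oo <= phiE (phio n phi) +oo)%E.
Proof.
move=> adm n0 [a [eta [a0 eta0 Ha]]] /=.
apply: ge_ereal_sup => _ [t /= t0 <-].
have [->|tpos] := eqVneq t 0.
  apply: le_ereal_sup_tmp; exists (phio n phi 0)%:E; first by exists 0 => //=; rewrite /= lexx.
  rewrite phio0 (phi0 adm); exact: lexx.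
have tp : 0 < t by rewrite lt_neqAle eq_sym tpos t0.
pose e2 := eta / 2.
have e20 : 0 < e2 by rewrite divr_gt0.
have e2e : e2 < eta by rewrite /e2 ltr_pdivrMr // ltr_pMr // ltr1n.
pose p0 := a * e2 ^+ n.
have p00 : 0 < p0 by rewrite mulr_gt0 // exprn_gt0.
have pe2 : p0 <= phi e2.
  have := Ha e2 e20 e2e; rewrite ler_pdivlMr //; exact: exprn_gt0.
pose r := 1 + t + phi t / a + phi t * t / p0.
have pt0 : 0 <= phi t := phi_ge0 adm t0.
have h1 : 0 <= phi t / a by apply: divr_ge0 => //; exact: ltW.
have h2 : 0 <= phi t * t / p0 by apply: divr_ge0; [exact: mulr_ge0 | exact: ltW].
have r1 : 1 <= r by rewrite /r; lra.
have rt : t <= r by rewrite /r; lra.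
have r0 : 0 < r by lra.
apply: le_ereal_sup_tmp; exists (phio n phi r)%:E; first by exists r => //=; rewrite /=; exact: ltW.
rewrite lee_fin /phio ifF; last by rewrite leNgt r0.
apply: lb_le_inf; first exact: phio_ne.
move=> _ [s /= s0 <-]; rewrite /Tf.
have rs0 : 0 <= r / s by rewrite divr_ge0 // ltW.
have ps0 : 0 <= phi s by apply: (phi_ge0 adm); exact: ltW.
case: (leP t s) => ts.
  apply: (le_trans (phi_mono adm t0 ts)).
  by apply: ler_peMr => //; rewrite le_max lexx.
apply: (@le_trans _ _ (phi s * (r / s) ^+ n)); last first.
  apply: ler_wpM2l => //.
  by rewrite le_max lexx orbT.
case: (ltP s eta) => se.
-
  have hs := Ha s s0 se; rewrite ler_pdivlMr in hs; last exact: exprn_gt0.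
  have sn0 : 0 < s ^+ n by exact: exprn_gt0.
  rewrite expr_div_n mulrA ler_pdivlMr //.
  apply: (@le_trans _ _ (a * s ^+ n * r ^+ n)); last first.
    by apply: ler_wpM2r; [exact: exprn_ge0 (ltW r0) | exact: hs].
  rewrite mulrC [a * _]mulrC -mulrA; apply: ler_wpM2l; first exact: exprn_ge0 (ltW s0).
  have : r <= r ^+ n by exact: ler_eXnr.
  have : phi t <= a * r.
    by rewrite -ler_pdivrMl // /r; lra.
  move=> h3 h4; apply: (le_trans h3); apply: ler_wpM2l => //; exact: ltW.
- have ps : p0 <= phi s.
    have e2s : e2 <= s by apply: le_trans (ltW e2e) se.
    apply: (le_trans pe2); apply: (phi_mono adm) => //; exact: ltW.
  have rts : 1 <= r / t by rewrite ler_pdivlMr // mul1r.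
  have : r / t <= r / s.
    apply: ler_wpM2l; first exact: ltW.
    rewrite lef_pV2 ?posrE //; exact: ltW.
  move=> hts.
  have : r / t <= (r / s) ^+ n.
    apply: (le_trans hts); apply: ler_eXnr => //; exact: le_trans hts.
  move=> hX.
  have : phi t <= p0 * (r / t).
    rewrite mulrA ler_pdivlMr // -ler_pdivrMl //.
    rewrite mulrC /r; lra.
  move=> h5; apply: (le_trans h5).
  apply: ler_pM => //; [exact: ltW | by apply: divr_ge0; exact: ltW].
Qed.

End Sup.
Section Main.
Variable R : realType.

Lemma phio_adm (phi : R -> R) n : admissible_gauge phi -> (0 < n)%N ->
  admissible_gauge (phio n phi).
Proof.
move=> adm n0; split.
- exact: phio_cont.
- by move=> r _; exact: phio_ge0.
- by move=> r s r0 rs; exact: phio_mono.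
- exact: phio0.
Qed.

Local Open Scope ereal_scope.

Lemma self_cover (phi : R -> R) n delta (A : set 'rV[R]_n) :
  admissible_gauge phi -> 0 <= delta -> diam A <= delta ->
  hcontent phi delta A <= phiE phi (diam A).
Proof.
move=> adm d0 AD.
have := @hcontent_fin _ phi n delta A (fun _ => A) 1 adm d0 (fun _ _ => AD).
rewrite big_nat1; apply => x Ax; by exists 0%N.
Qed.

Lemma set_bound (phi : R -> R) n delta (A : set 'rV[R]_n) :
  admissible_gauge phi -> (0 < n)%N ->
  phiE phi +oo <= phiE (phio n phi) +oo ->
  0 < delta -> diam A <= delta ->
  hcontent phi delta A <= ((3 * n%:R) ^+ n)%:E * phiE (phio n phi) (diam A).
Proof.
move=> adm n0 hsup d0 AD.
set C := ((3 * n%:R) ^+ n)%R.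
have n1 : (1 <= n%:R :> R)%R by rewrite ler1n.
have C1 : (1 <= C)%R by rewrite exprn_ege1 //; lra.
have C0 : (0 < C)%R by lra.
have self := self_cover adm (ltW d0) AD.
have H0 := hcontent_ge0 delta A adm.
case dA : (diam A) AD self => [d| |] AD self.
- have [dge0 Ad] := diam_fin dA.
  rewrite /=.
  have [dle0|dpos] := leP d 0%R.
    have d00 : d = 0%R by apply/eqP; rewrite eq_le dle0 dge0.
    rewrite /phio dle0 mule0; apply: (le_trans self).
    by rewrite /= d00 (phi0 adm).
  have key s : (0 < s)%R -> hcontent phi delta A <= (C * Tf n phi d s)%:E.
    move=> s0; case: (leP d s) => ds.
    - apply: (le_trans self); rewrite /= lee_fin.
      apply: (@le_trans _ _ (Tf n phi d s)); last first.
        by apply: ler_peMl => //; apply: Tf_ge0.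
      apply: (le_trans (phi_mono adm dge0 ds)); rewrite /Tf.
      apply: ler_peMr; first by apply: (phi_ge0 adm); exact: ltW.
      by rewrite le_max lexx.
    - have [[a Aa]|A0] := pselect (exists a, A a); last first.
        have : A = set0 by apply/seteqP; split => // x Ax; apply: A0; exists x.
        by move=> A00; move: dA; rewrite A00 diam0 => -[] d0'; rewrite d0' ltxx in dpos.
      have sD : s%:E <= delta by apply: le_trans AD; rewrite lee_fin ltW.
      apply: (le_trans (grid_bound adm n0 s0 (ltW ds) sD Ad Aa)).
      rewrite lee_fin /Tf exprMn -/C -mulrA; apply: ler_wpM2l; first exact: ltW.
      rewrite mulrC; apply: ler_wpM2l; first by apply: (phi_ge0 adm); exact: ltW.
      by rewrite le_max lexx orbT.
  have := key 1%R ltr01.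
  case hH : (hcontent phi delta A) => [h| |] //; last by rewrite hH in H0.
  rewrite !lee_fin => _.
  rewrite -ler_pdivrMl // /phio ifF; last by rewrite leNgt dpos.
  apply: lb_le_inf; first exact: phio_ne.
  move=> _ [s s0 <-]; rewrite ler_pdivrMl //.
  by have := key s s0; rewrite hH lee_fin.
- apply: (le_trans self); apply: (le_trans hsup).
  apply: lee_pemull; last by rewrite lee_fin.
  by apply: le_trans hsup; apply: phiE_ge0.
- by have := diam_ge0 A; rewrite dA.
Qed.

Lemma phiE_mono (phi : R -> R) n x : admissible_gauge phi -> 0 <= x ->
  phiE (phio n phi) x <= phiE phi x.
Proof.
move=> adm; case: x => [r| |] //= r0.
- by rewrite lee_fin; apply: phio_le_phi.
- apply: ge_ereal_sup => _ [r /= r0' <-]; apply: le_ereal_sup_tmp.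
  exists (phi r)%:E; first by exists r.
  by rewrite lee_fin; apply: phio_le_phi.
Qed.

Lemma hcontent_0dim (psi : R -> R) delta (E : set 'rV[R]_0) :
  admissible_gauge psi -> 0 <= delta -> hcontent psi delta E = 0.
Proof.
move=> adm d0; apply/eqP; rewrite eq_le hcontent_ge0 // andbT.
have dT : diam (@setT 'rV[R]_0) = 0.
  apply/eqP; rewrite eq_le diam_ge0 andbT; apply: diam_le => // x y _ _.
  by rewrite /edist big_ord0 sqrtr0.
have dTd : forall j, (j < 1)%N -> diam (@setT 'rV[R]_0) <= delta by move=> j _; rewrite dT.
have := @hcontent_fin _ psi 0 delta E (fun _ => setT) 1 adm d0 dTd.
rewrite big_nat1 dT /= (phi0 adm); apply => x _; by exists 0%N.
Qed.

End Main.
Theorem lemma2p1 (R : realType) (n : nat) :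
  exists c : R, 0 < c /\
  forall phi : R -> R,
    admissible_gauge phi ->
    (0 < limf_einf (fun r : R => (phi r / r ^+ n)%:E) (0^'+))%E ->
    exists phio : R -> R,
      [/\ admissible_gauge phio,
          (forall r s : R, 0 < r -> r <= s -> phio s / s ^+ n <= phio r / r ^+ n) &
          forall (delta : \bar R) (E : set 'rV[R]_n), (0 < delta)%E ->
            (c%:E * hcontent phi delta E <= hcontent phio delta E)%E /\
            (hcontent phio delta E <= hcontent phi delta E)%E].
Proof.
case: n => [|n].
- exists 1; split; first exact: ltr01.
  move=> phi adm _.
  have adm0 : admissible_gauge (fun _ : R => 0 : R).
    split => //; apply/subspace_continuousP => x _; exact: cvg_cst.
  exists (fun _ => 0); split => //; try (by move=> r s _ _; rewrite !mul0r).
  move=> delta E d0; rewrite !hcontent_0dim // ?mule0 //; exact: ltW.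
- have n0 : (0 < n.+1)%N by [].
  set C : R := (3 * n.+1%:R) ^+ n.+1.
  have C0 : 0 < C by rewrite exprn_gt0 // mulr_gt0 // ltr0n.
  exists C^-1; split; first by rewrite invr_gt0.
  move=> phi adm hlim.
  have hsup := sup_rel adm n0 (liminf_pos hlim).
  exists (phio n.+1 phi); split.
  + exact: phio_adm.
  + move=> r s r0 rs.
    have s0 : 0 < s by apply: lt_le_trans rs.
    have := @phio_ratio _ n.+1 phi adm r s r0 rs.
    have sn : 0 < s ^+ n.+1 by exact: exprn_gt0.
    have rn : 0 < r ^+ n.+1 by exact: exprn_gt0.
    rewrite expr_div_n mulrAC ler_pdivlMr // => h.
    rewrite ler_pdivrMr // mulrAC ler_pdivlMr //.
    by rewrite [phio n.+1 phi r * _]mulrC.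
  + move=> delta E d0; split.
    * apply: le_ereal_inf_tmp => _ [F [FD EF ->]].
      apply: (le_trans (lee_wpmul2l _ (@hcontent_sub _ phi _ delta _ _ adm EF))).
        by rewrite lee_fin invr_ge0 ltW.
      rewrite -nneseriesZl; last by move=> i _; exact: hcontent_ge0.
      apply: lee_nneseries.
        move=> i _ _; apply: mule_ge0; last exact: hcontent_ge0.
        by rewrite lee_fin invr_ge0 ltW.
      move=> i _; rewrite lee_pdivrMl //.
      exact: set_bound adm n0 hsup d0 (FD i).
    * apply: le_ereal_inf_tmp => _ [F [FD EF ->]].
      apply: (@le_trans _ _ (\sum_(i <oo) phiE (phio n.+1 phi) (diam (F i)))%E).
        by apply: ereal_inf_lbound; exists F; split.
      apply: lee_nneseries => [i _ _|i _].
        exact: phiE_diam_ge0 (phio_adm adm n0).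
      exact: phiE_mono adm (diam_ge0 _).
Qed.
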